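(* Let $\mathfrak u$ be either an infinite sequence with all terms in $\{0,1\}$, or a finite sequence of length $N\ge1$ with all terms in $\{0,1\}$. Then $\Upsilon(\Upsilon(\mathfrak u))=\mathfrak u$. Consequently $\Upsilon^{(6)}(\mathfrak u)=\mathfrak u$, i.e. all levels of the discrete helicoid generated by $\mathfrak u$ coincide, and its base level consists of three copies (rotated about $a_0$ by multiples of $120^\circ$) of the rhombus formed by the P-G triangle generated by $\mathfrak u$ together with the P-G triangle generated by $\Upsilon(\mathfrak u)$, these two triangles being mirror images of each other across their common edge $\Upsilon(\mathfrak u)$.
   Context: For a finite or infinite sequence $\mathfrak u=(a_0,a_1,\dots)$ of non-negative integers, the P-G triangle generated by $\mathfrak u$ consists of the numbers $d_k^{(j)}$ defined by $d_k^{(0)}=a_k$ and $d_k^{(j+1)}=|d_{k+1}^{(j)}-d_k^{(j)}|$ for $j,k\ge 0$ (for a finite sequence $(a_0,\dots,a_{N-1})$, for $0\le k\le N-1-j$). The operator $\Upsilon$ sends $\mathfrak u$ to the left edge $(d_0^{(0)},d_0^{(1)},d_0^{(2)},\dots)$ of its P-G triangle (a sequence of the same length as $\mathfrak u$); $\Upsilon^{(n)}$ denotes its $n$-th iterate. Geometrically, the P-G triangle of $\Upsilon^{(k+1)}(\mathfrak u)$ is placed rotated by $60^\circ$ clockwise about $a_0$ relative to that of $\Upsilon^{(k)}(\mathfrak u)$, sharing the edge $\Upsilon^{(k+1)}(\mathfrak u)$; the six triangles for $k=0,\dots,5$ form the base level of the helicoid, and level $n+1$ is the base level generated by $\Upsilon^{(6n)}(\mathfrak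 u)$. *)

(* Defs.v *)
From mathcomp Require Import all_boot.
Set Implicit Arguments. Unset Strict Implicit. Unset Printing Implicit Defensive.

Definition absdiff (m n : nat) : nat := (m - n) + (n - m).

(* P-G triangle of an (infinite) sequence u : nat -> nat:
   pg u j k = d_k^{(j)}, with d_k^{(0)} = a_k and
   d_k^{(j+1)} = |d_{k+1}^{(j)} - d_k^{(j)}|. *)
Fixpoint pg (u : nat -> nat) (j : nat) (k : nat) {struct j} : nat :=
  match j with
  | 0 => u k
  | j'.+1 => absdiff (pg u j' k.+1) (pg u j' k)
  end.

Definition Ups (u : nat -> nat) : nat -> nat := fun j => pg u j 0.

(* Finite sequences (a_0,...,a_{N-1}) are lists s of size N.
   The P-G triangle entry d_k^{(j)} (for j + k <= N-1) only uses
   a_k,...,a_{k+j}, so it is computed from the padded sequence nth 0 s. *)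
Definition pgF (s : seq nat) (j k : nat) : nat := pg (nth 0 s) j k.

Definition UpsF (s : seq nat) : seq nat := mkseq (fun j => pgF s j 0) (size s).

(* Main.v *)
Require Import Defs.
From mathcomp Require Import all_boot.
From mathcomp Require Import zify.
From Stdlib Require Import FunctionalExtensionality.

Lemma absdiff_le1 a b : a <= 1 -> b <= 1 -> absdiff a b <= 1.
Proof. rewrite /absdiff; lia. Qed.

Lemma absdiffK a b : a <= 1 -> b <= 1 -> absdiff (absdiff a b) b = a.
Proof. rewrite /absdiff; lia. Qed.

Lemma pg_le1 u : (forall i, u i <= 1) -> forall j k, pg u j k <= 1.
Proof. move=> H; elim=> [|j IH] k //=; exact: absdiff_le1. Qed.

Lemma pg_sym u : (forall i, u i <= 1) -> forall j k, pg (Ups u) j k = pg u k j.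
Proof.
move=> H; elim=> [|j IH] k //=.
rewrite !IH /= absdiffK //; exact: pg_le1.
Qed.

Lemma pg_ext u v N : (forall i, i < N -> u i = v i) ->
  forall j k, j + k < N -> pg u j k = pg v j k.
Proof.
move=> H; elim=> [|j IH] k /= hk; first by apply: H; lia.
rewrite !IH //; lia.
Qed.

Lemma iter_inv (T : Type) (f : T -> T) x : f (f x) = x -> forall n, iter (6 * n) f x = x.
Proof.
move=> H n; have -> : 6 * n = 2 * (3 * n) by lia.
elim: (3 * n) => [|m IH] //.
by rewrite mulnS !iterS IH H.
Qed.

Lemma nthUpsF s i : i < size s -> nth 0 (UpsF s) i = Ups (nth 0 s) i.
Proof. by move=> hi; rewrite /UpsF nth_mkseq. Qed.

Theorem theorem2p4 :
  (forall u : nat -> nat, (forall i, u i <= 1) ->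
     [/\ Ups (Ups u) = u,
         (forall n, iter (6 * n) Ups u = u) &
         (forall j k, pg (Ups u) j k = pg u k j)])
  /\
  (forall s : seq nat, 0 < size s -> all (fun x => x <= 1) s ->
     [/\ UpsF (UpsF s) = s,
         (forall n, iter (6 * n) UpsF s = s) &
         (forall j k, j + k < size s -> pgF (UpsF s) j k = pgF s k j)]).
Proof.
have inf : forall u : nat -> nat, (forall i, u i <= 1) -> Ups (Ups u) = u.
  move=> u H; apply: functional_extensionality_dep => j.
  by rewrite /Ups pg_sym.
split.
  move=> u H; split; [exact: inf | exact: iter_inv (inf u H) | exact: pg_sym].
move=> s _ Hs.
have Hb : forall i, nth 0 s i <= 1.
  move=> i; case: (ltnP i (size s)) => hi; last by rewrite nth_default.
  by move/allP: Hs; apply; rewrite mem_nth.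
have key : forall j k, j + k < size s -> pgF (UpsF s) j k = pgF s k j.
  move=> j k hjk; rewrite /pgF -(@pg_sym (nth 0 s) Hb).
  apply: (@pg_ext _ _ (size s)); last lia.
  move=> i hi; rewrite /Ups /UpsF nth_mkseq //.
have invF : UpsF (UpsF s) = s.
  apply: (@eq_from_nth _ 0); first by rewrite /UpsF !size_mkseq.
  move=> i; rewrite /UpsF !size_mkseq => hi.
  rewrite nth_mkseq //.
  by rewrite -/(pgF (UpsF s) i 0) key ?addn0.
split => //; exact: iter_inv.
Qed.
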